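(* For every one-red TAP instance, the set of exemplars output by GREEDY has margin at least $\tfrac12$ times the maximum margin of the instance; that is, GREEDY is a $\tfrac12$-approximation for one-red TAP. Consequently GREEDY is a $\tfrac12$-approximation for $2$-weight TAP (instances in which every exemplar contains at most two features and, by the standing preprocessing, at least one red and at least one blue feature).
   Context: Target Approximation Problem (TAP): the input is a groundset $U$ of features, a target $T\subseteq U$, and a collection $S$ of exemplars, each a subset of $U$. Features in $U\cap T$ are blue, features in $U\setminus T$ are red. A feature appears in $S'\subseteq S$ if it lies in $\bigcup_{E\in S'}E$. The margin of $S'$ is (number of blue features appearing in $S'$) minus (number of red features appearing in $S'$); TAP asks for $S'$ of maximum margin. It is assumed that every feature appears in at least one exemplar and that $T$ and all exemplars are nonempty. Standing preprocessing: exemplars with no red feature are always taken and removed together with their features, and exemplars with no blue feature are deleted, so every exemplar contains at least one red and at least one blue feature. An instance is one-red if every exemplar contains exactly one red feature. A red feature $r$ covers a blue feature $b$ if some exemplar contains both. GREEDY: until every blue feature is covered, repeatedly choose the red feature that covers the largest number of not-yet-covered blue features (ties broken arbitrarily); the output is the set of all exemplars containing a chosen red feature. *)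

(* Defs.v *)
From mathcomp Require Import all_boot all_order all_algebra.
Set Implicit Arguments. Unset Strict Implicit. Unset Printing Implicit Defensive.
Import GRing.Theory Num.Theory.

(* A TAP instance: finite groundset U of features, target T : {set U},
   exemplars indexed by a finite type I, exemplar i being ex i : {set U}.
   Blue features = those in T, red features = those outside T. *)

Section TAP.
Variables (U I : finType) (T : {set U}) (ex : I -> {set U}).

Definition appearing (S' : {set I}) : {set U} := \bigcup_(i in S') ex i.

Definition margin (S' : {set I}) : int :=
  (#|appearing S' :&: T|%:Z - #|appearing S' :\: T|%:Z)%R.

Definition tap_instance : Prop :=
  (forall u : U, exists i, u \in ex i) /\ T != set0 /\ (forall i, ex i != set0).

Definition preprocessed : Prop :=
  forall i, (exists2 r, r \in ex i & r \notin T) /\ (exists2 b, b \in ex i & b \in T).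

Definition one_red : Prop := forall i, #|ex i :\: T| = 1%N.

Definition two_weight : Prop := forall i, (#|ex i| <= 2)%N.

Definition covers (r b : U) : bool := [exists i, (r \in ex i) && (b \in ex i)].

Definition covered_by (R : seq U) (b : U) : bool := has (fun r => covers r b) R.

Definition gain (R : seq U) (r : U) : nat :=
  #|[set b in T | covers r b && ~~ covered_by R b]|.

(* rs is a possible run of GREEDY (with some tie-breaking): at each step
   some blue feature is still uncovered, and the chosen feature is red and
   maximizes the gain among red features; at the end all blue features are
   covered. *)
Definition greedy_run (rs : seq U) : Prop :=
  (forall (R : seq U) (r : U) (rest : seq U), rs = R ++ r :: rest ->
     [exists b, (b \in T) && ~~ covered_by R b] /\ r \notin T /\
     forall r', r' \notin T -> (gain R r' <= gain R r)%N)
  /\ (forall b, b \in T -> covered_by rs b).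

Definition greedy_output (rs : seq U) : {set I} :=
  [set i | has (fun r => r \in ex i) rs].
End TAP.

(* Main.v *)
Require Import Defs.
From mathcomp Require Import all_boot all_order all_algebra.
From mathcomp Require Import zify.
Import GRing.Theory Num.Theory.
Set Implicit Arguments. Unset Strict Implicit. Unset Printing Implicit Defensive.

Section Proof.
Variables (U I : finType) (T : {set U}) (ex : I -> {set U}).
Notation cov := (covered_by ex).
Notation gn := (gain T ex).

Lemma cov_cat R r b : cov (R ++ [:: r]) b = cov R b || covers ex r b.
Proof. by rewrite /covered_by has_cat /= orbF. Qed.

Lemma gain_mono R r r' : (gn (R ++ [:: r]) r' <= gn R r')%N.
Proof.
apply: subset_leq_card; apply/subsetP => b; rewrite !inE cov_cat negb_or.
by case: (b \in T); case: (cov R b); case: (covers ex r b); case: (covers ex r' b).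
Qed.

Definition unc R := [set b in T | ~~ cov R b].

Lemma unc_cat R r : #|unc R| = (#|unc (R ++ [:: r])| + gn R r)%N.
Proof.
rewrite -(cardsID [set b | covers ex r b] (unc R)) addnC.
congr (_ + _)%N; apply: eq_card => b; rewrite !inE ?cov_cat ?negb_or;
by case: (b \in T); case: (cov R b); case: (covers ex r b).
Qed.

Variable R' : {set U}.
Definition NR b := [exists r in R', covers ex r b].
Definition Aset R := [set b in T | NR b && ~~ cov R b].
Definition Bset R := [set r in R' | 0 < gn R r]%N.
Definition Xset R r := Aset R :&: [set b | covers ex r b].

Lemma B_mono R r : (#|Bset (R ++ [:: r])| <= #|Bset R|)%N.
Proof.
apply: subset_leq_card; apply/subsetP => x; rewrite !inE => /andP[-> h] /=.
exact: leq_trans h (gain_mono _ _ _).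
Qed.

Lemma A_cat R r : #|Aset R| = (#|Aset (R ++ [:: r])| + #|Xset R r|)%N.
Proof.
rewrite -(cardsID [set b | covers ex r b] (Aset R)) addnC.
congr (_ + _)%N; apply: eq_card => b; rewrite !inE ?cov_cat ?negb_or;
by case: (b \in T); case: (cov R b); case: (covers ex r b); case: (NR b).
Qed.

Lemma X_le R r : (#|Xset R r| <= gn R r)%N.
Proof.
apply: subset_leq_card; apply/subsetP => b; rewrite !inE.
by case: (b \in T); case: (cov R b); case: (covers ex r b); case: (NR b).
Qed.

Lemma A_unc R : (#|Aset R| <= #|unc R|)%N.
Proof.
apply: subset_leq_card; apply/subsetP => b; rewrite !inE.
by case: (b \in T); case: (cov R b); case: (NR b).
Qed.

Lemma key R r : (forall r', r' \in R' -> gn R r' <= gn R r)%N -> gn R r = 1%N ->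
  (0 < #|Xset R r|)%N -> (#|Bset (R ++ [:: r])| < #|Bset R|)%N.
Proof.
move=> hmax hg /card_gt0P [b]; rewrite !inE => /andP[/and3P[bT /existsP[r' /andP[r'R cr'b]] ncov] crb].
have gs : b \in [set b0 in T | covers ex r' b0 && ~~ cov R b0] by rewrite !inE bT cr'b ncov.
have g1 : gn R r' = 1%N.
  apply/eqP; rewrite eqn_leq; apply/andP; split; first by rewrite -hg; exact: hmax.
  rewrite /gain; apply/card_gt0P; exists b; exact: gs.
have g0 : gn (R ++ [:: r]) r' = 0%N.
  apply/eqP; rewrite -leqn0.
  have := cardsD1 b [set b0 in T | covers ex r' b0 && ~~ cov R b0].
  rewrite gs /= -/(gn R r') g1 => /eqP; rewrite eqSS => /eqP e.
  rewrite /gain; rewrite e; apply: subset_leq_card; apply/subsetP => x.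
  rewrite !inE cov_cat negb_or => /andP[xT /andP[-> /andP[-> ncr]]].
  rewrite xT andbT /= andbT; apply/eqP => exb; subst x; by rewrite crb in ncr.
apply: proper_card; apply/properP; split; first first.
  exists r'; rewrite !inE r'R ?g1 ?g0 //.
apply/subsetP => x; rewrite !inE => /andP[-> h] /=.
exact: leq_trans h (gain_mono _ _ _).
Qed.

Lemma phi_bound rs :
  tap_instance T ex -> preprocessed T ex -> greedy_run T ex rs ->
  (forall r, r \in R' -> r \notin T) ->
  forall rest R, rs = R ++ rest ->
  (#|Aset R| + 2 * size rest <= #|Bset R| + 2 * #|unc R|)%N.
Proof.
move=> [hcov _] hpre [hg _] hred; elim=> [|r rest IH] R e.
  rewrite /=; have := A_unc R; lia.
have [/existsP [b0 /andP[b0T nb0]] [rT hmax]] := hg R r rest e.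
have e2 : rs = (R ++ [:: r]) ++ rest by rewrite e -catA.
have IH2 := IH _ e2.
have g1 : (0 < gn R r)%N.
  have [i bi] := hcov b0; have [[r0 r0i r0T] _] := hpre i.
  apply: leq_trans (hmax r0 r0T); apply/card_gt0P; exists b0.
  rewrite !inE b0T nb0 andbT; apply/existsP; exists i; by rewrite r0i bi.
have hA := A_cat R r; have hB := B_mono R r; have hX := X_le R r; have hU := unc_cat R r.
have hk := key (fun r' hr' => hmax r' (hred r' hr')).
rewrite /=.
case: (posnP #|Xset R r|) => hx0; first lia.
case: (ltnP 1 (gn R r)) => hg2; first lia.
have hr1 : gn R r = 1%N by lia.
have := hk hr1 hx0; lia.
Qed.
End Proof.

Lemma in_split (U : eqType) (s : seq U) x : x \in s -> exists p1 p2, s = p1 ++ x :: p2.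
Proof. by case/splitPr => p1 p2; exists p1, p2. Qed.

Lemma part1 (U I : finType) (T : {set U}) (ex : I -> {set U}) (rs : seq U) :
     tap_instance T ex -> preprocessed T ex -> one_red T ex ->
     greedy_run T ex rs ->
     forall S' : {set I}, (margin T ex S' <= 2 * margin T ex (greedy_output ex rs))%R.
Proof.
move=> htap hpre h1 hgr S'.
set R' := appearing ex S' :\: T.
have hred : forall r, r \in R' -> r \notin T by move=> r; rewrite inE => /andP[].
have hb := phi_bound htap hpre hgr hred (rest := rs) (R := [::]) erefl.
have hu : #|unc T ex [::]| = #|T|.
  by apply: eq_card => b; rewrite inE /covered_by /= andbT.
have hBle : (#|Bset T ex R' [::]| <= #|R'|)%N.
  by apply: subset_leq_card; apply/subsetP => x; rewrite inE => /andP[].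
have hAS : (#|appearing ex S' :&: T| <= #|Aset T ex R' [::]|)%N.
  apply: subset_leq_card; apply/subsetP => b; rewrite !inE => /andP[/bigcupP[i iS bi] bT].
  rewrite bT /= andbT; have /card_gt0P [r] : (0 < #|ex i :\: T|)%N by rewrite h1.
  rewrite inE => /andP[rT ri]; apply/existsP; exists r; rewrite inE rT /=.
  apply/andP; split; first by apply/bigcupP; exists i.
  by apply/existsP; exists i; rewrite ri bi.
have hG1 : #|appearing ex (greedy_output ex rs) :&: T| = #|T|.
  apply/eqP; rewrite eqn_leq subset_leq_card ?subsetIr //=; apply: subset_leq_card.
  apply/subsetP => b bT; rewrite inE bT andbT; have := hgr.2 b bT.
  case/hasP => r rrs /existsP[i /andP[ri bi]]; apply/bigcupP; exists i => //.
  by rewrite inE; apply/hasP; exists r.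
have hG2 : (#|appearing ex (greedy_output ex rs) :\: T| <= size rs)%N.
  apply: leq_trans (card_size rs); apply: subset_leq_card; apply/subsetP => x.
  rewrite !inE => /andP[xnT /bigcupP[i]]; rewrite inE => /hasP[r rrs ri] xi.
  have [p1 [p2 e]] := in_split rrs.
  have [_ [rT _]] := hgr.1 p1 r p2 e.
  have /cards1P [y ey] : #|ex i :\: T| == 1%N by rewrite h1.
  have : x \in ex i :\: T by rewrite inE xnT xi.
  have : r \in ex i :\: T by rewrite inE rT ri.
  by rewrite ey !inE => /eqP ry /eqP xy; rewrite xy -ry.
rewrite /margin -/R'; lia.
Qed.

Lemma tw_one (U I : finType) (T : {set U}) (ex : I -> {set U}) :
  preprocessed T ex -> two_weight ex -> one_red T ex.
Proof.
move=> hp hw i; have [[r ri rT] [b bi bT]] := hp i.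
apply/eqP; rewrite eqn_leq; apply/andP; split.
  have : ex i :\: T \proper ex i.
    by apply/properP; split; [exact: subsetDl | exists b => //; rewrite inE bT].
  move/proper_card; have := hw i; lia.
by apply/card_gt0P; exists r; rewrite inE rT ri.
Qed.

Local Open Scope ring_scope.
Theorem theorem13 :
  (forall (U I : finType) (T : {set U}) (ex : I -> {set U}) (rs : seq U),
     tap_instance T ex -> preprocessed T ex -> one_red T ex ->
     greedy_run T ex rs ->
     forall S' : {set I}, margin T ex S' <= 2 * margin T ex (greedy_output ex rs))
  /\
  (forall (U I : finType) (T : {set U}) (ex : I -> {set U}) (rs : seq U),
     tap_instance T ex -> preprocessed T ex -> two_weight ex ->
     greedy_run T ex rs ->
     forall S' : {set I}, margin T ex S' <= 2 * margin T ex (greedy_output ex rs)).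
Proof.
split; first exact: part1.
move=> U I T ex rs ht hp hw; exact: part1 ht hp (tw_one hp hw).
Qed.
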